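(* Let $k$ be a field, $r\ge2$, and let $B$ be an $F_r$-Lie algebra satisfying $\Phi1$: $\forall x_1,\dots,x_4\ (x_1x_2)(x_3x_4)=0$, $\Phi2$: $\forall x,y\ (xyx=0\wedge xyy=0\to xy=0)$ and $\Phi3$: $\forall x,y,z\ (x\ne0\wedge xy=0\wedge xz=0\to yz=0)$. Let $c_1,\dots,c_n$, $n\le r$, be elements of the designated copy of $F_r$ which are linearly independent modulo $\mathrm{Fit}(F_r)$. Then $c_1,\dots,c_n$ are linearly independent modulo $\mathrm{Fit}(B)$.
   Context: $F_r$ is the free metabelian Lie algebra over $k$ of rank $r$ with free base $a_1,\dots,a_r$; an $F_r$-Lie algebra is a Lie algebra containing a designated copy of $F_r$. Products are left-normed. $\mathrm{Fit}(\cdot)$ denotes the Fitting radical (sum of all nilpotent ideals). *)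

(* Defs.v *)
From HB Require Import structures.
From mathcomp Require Import all_boot all_order all_algebra.
Set Implicit Arguments. Unset Strict Implicit. Unset Printing Implicit Defensive.
Import GRing.Theory.
Local Open Scope ring_scope.

Section LieDefs.
Variable k : fieldType.

Definition is_lie (L : lmodType k) (br : L -> L -> L) : Prop :=
  [/\ (forall (a : k) (x y z : L), br (a *: x + y) z = a *: br x z + br y z),
      (forall (a : k) (x y z : L), br z (a *: x + y) = a *: br z x + br z y),
      (forall x : L, br x x = 0) &
      (forall x y z : L, br (br x y) z + br (br y z) x + br (br z x) y = 0)].

Variable L : lmodType k.
Variable br : L -> L -> L.

(* left-normed product x1 x2 ... xm = (...(x1 x2) ...) xm ; empty product 0 *)
Definition lnprod (s : seq L) : L :=
  if s is x :: s' then foldl br x s' else 0.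

Definition subspace (P : L -> Prop) : Prop :=
  P 0 /\ forall (a : k) (x y : L), P x -> P y -> P (a *: x + y).

Definition gen_subalg (r : nat) (a : 'I_r -> L) (x : L) : Prop :=
  forall P : L -> Prop, subspace P ->
    (forall y z, P y -> P z -> P (br y z)) -> (forall i, P (a i)) -> P x.

Definition ideal_in (S I : L -> Prop) : Prop :=
  subspace I /\ (forall x, I x -> S x) /\
  (forall s x, S s -> I x -> I (br s x)).

Definition nilpotent_pred (I : L -> Prop) : Prop :=
  exists m : nat, (0 < m)%N /\
    forall s : seq L, size s = m -> (forall y, y \in s -> I y) -> lnprod s = 0.

Definition Fit_in (S : L -> Prop) (x : L) : Prop :=
  exists s : seq L, x = \sum_(y <- s) y /\
    forall y, y \in s -> exists I : L -> Prop,
      [/\ ideal_in S I, nilpotent_pred I & I y].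

Definition free_metabelian_on (r : nat) (a : 'I_r -> L) : Prop :=
  (forall x1 x2 x3 x4, gen_subalg a x1 -> gen_subalg a x2 ->
       gen_subalg a x3 -> gen_subalg a x4 ->
       br (br x1 x2) (br x3 x4) = 0) /\
  forall (M : lmodType k) (brM : M -> M -> M), is_lie brM ->
    (forall y1 y2 y3 y4 : M, brM (brM y1 y2) (brM y3 y4) = 0) ->
    forall m : 'I_r -> M, exists f : L -> M,
      [/\ (forall (c : k) x y, gen_subalg a x -> gen_subalg a y ->
             f (c *: x + y) = c *: f x + f y),
          (forall x y, gen_subalg a x -> gen_subalg a y ->
             f (br x y) = brM (f x) (f y)) &
          (forall i, f (a i) = m i)].

End LieDefs.

(* Main.v *)
Require Import Defs.
From HB Require Import structures.
From mathcomp Require Import all_boot all_order all_algebra.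
Import GRing.Theory.
Local Open Scope ring_scope.

Section Aux.
Variables (k : fieldType) (B : lmodType k) (br : B -> B -> B).
Hypothesis hLie : is_lie br.
Hypothesis Phi2 : forall x y : B,
        br (br x y) x = 0 -> br (br x y) y = 0 -> br x y = 0.

Lemma brDl x y z : br (x + y) z = br x z + br y z.
Proof. move: hLie; rewrite /is_lie => -[h _ _ _]. by rewrite -[x]scale1r h !scale1r. Qed.
Lemma brDr x y z : br z (x + y) = br z x + br z y.
Proof. move: hLie; rewrite /is_lie => -[_ h _ _]. by rewrite -[x]scale1r h !scale1r. Qed.
Lemma br0l z : br 0 z = 0.
Proof. have h := brDl 0 0 z. rewrite addr0 -[in LHS](addr0 (br 0 z)) in h.
by move/addrI: h. Qed.
Lemma br0r z : br z 0 = 0.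
Proof. have h := brDr 0 0 z. rewrite addr0 -[in LHS](addr0 (br z 0)) in h.
by move/addrI: h. Qed.
Lemma brN x y : br y x = - br x y.
Proof.
move: hLie; rewrite /is_lie => -[_ _ hxx _].
have := hxx (x + y). rewrite brDl !brDr !hxx add0r addr0 => /eqP.
by rewrite addr_eq0 => /eqP ->; rewrite opprK.
Qed.
Lemma br_suml (s : seq B) w : br (\sum_(y <- s) y) w = \sum_(y <- s) br y w.
Proof. elim: s => [|y s IH]; first by rewrite !big_nil br0l.
by rewrite !big_cons brDl IH. Qed.
Lemma br_sumr (s : seq B) w : br w (\sum_(y <- s) y) = \sum_(y <- s) br w y.
Proof. elim: s => [|y s IH]; first by rewrite !big_nil br0r.
by rewrite !big_cons brDr IH. Qed.

Lemma subZ (I : B -> Prop) a x : subspace I -> I x -> I (a *: x).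
Proof. case=> h0 h Ix. by rewrite -[_ *: x]addr0; apply: h. Qed.
Lemma subN (I : B -> Prop) x : subspace I -> I x -> I (- x).
Proof. move=> hI Ix. rewrite -scaleN1r. exact: subZ. Qed.

Lemma lnprod_rcons x s q :
  lnprod br (rcons (x :: s) q) = br (lnprod br (x :: s)) q.
Proof. by rewrite /= foldl_rcons. Qed.

Section Nil.
Variables (S I : B -> Prop).
Hypothesis hI : ideal_in br S I.
Variable m : nat.
Hypothesis hm : forall s : seq B, size s = m ->
  (forall y, y \in s -> I y) -> lnprod br s = 0.

Lemma lnprod_in s x : I x -> (forall y, y \in s -> I y) -> I (lnprod br (x :: s)).
Proof.
case: hI => _ [IS Ibr].
elim: s x => [|y s IH] x Ix Hs //=.
apply: (IH (br x y)).
  by apply: Ibr; [exact: IS | apply: Hs; rewrite inE eqxx].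
by move=> z zs; apply: Hs; rewrite inE zs orbT.
Qed.

Lemma nilQ d : forall j, (j + d.+2 = m)%N -> forall x s q, size s = j ->
  I x -> (forall y, y \in s -> I y) -> I q -> br (lnprod br (x :: s)) q = 0.
Proof.
elim: d => [|d IH] j hj x s q hs Ix Hs Iq.
  rewrite -lnprod_rcons; apply: hm.
    by rewrite /= size_rcons hs -hj addn2.
  move=> y; rewrite mem_rcons inE => /orP[/eqP->//|].
  by rewrite inE => /orP[/eqP->//|]; apply: Hs.
have Hs' : forall y, y \in rcons s q -> I y.
  by move=> y; rewrite mem_rcons inE => /orP[/eqP->//|]; apply: Hs.
have hs' : size (rcons s q) = j.+1 by rewrite size_rcons hs.
have hj' : (j.+1 + d.+2 = m)%N by rewrite -hj addSnnS.
apply: Phi2.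
  rewrite -lnprod_rcons. apply: (IH j.+1 hj') => //. exact: lnprod_in.
rewrite -lnprod_rcons. exact: (IH j.+1 hj').
Qed.
End Nil.

Lemma nil_ab S I u v : ideal_in br S I -> nilpotent_pred br I ->
  I u -> I v -> br u v = 0.
Proof.
move=> hI [m [m0 hm]] Iu Iv.
case: m m0 hm => [//|[|d]] _ hm.
  have : lnprod br [:: u] = 0 by apply: hm => // y; rewrite inE => /eqP->.
  by move=> /= ->; rewrite br0l.
exact: (@nilQ S I hI d.+2 hm d 0%N erefl u [::] v erefl Iu (fun y yin => match notF yin with end) Iv).
Qed.

Definition FitB := Fit_in br (fun _ => True).

Lemma Fit_ab u v : FitB u -> FitB v -> br u v = 0.
Proof.
move=> [s [-> Hs]] [t [-> Ht]].
rewrite br_suml big1_seq // => y /andP[_ ys].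
rewrite br_sumr big1_seq // => z /andP[_ zt].
have [I [hI nI Iy]] := Hs y ys.
have [J [hJ nJ Jz]] := Ht z zt.
have Jyz : J (br y z) by case: hJ => _ [_ h]; exact: h.
have Iyz : I (br y z).
  rewrite brN; apply: subN; first by case: hI.
  by case: hI => _ [_ h]; exact: h.
apply: Phi2; [exact: (nil_ab _ _ _ _ hI nI) | exact: (nil_ab _ _ _ _ hJ nJ)].
Qed.

Lemma Fit0 S : Fit_in br S 0.
Proof. by exists [::]; rewrite big_nil. Qed.
Lemma FitD S x y : Fit_in br S x -> Fit_in br S y -> Fit_in br S (x + y).
Proof.
move=> [s [-> Hs]] [t [-> Ht]]; exists (s ++ t); rewrite big_cat; split=> //.
by move=> z; rewrite mem_cat => /orP[]; [apply: Hs | apply: Ht].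
Qed.
Lemma FitZ S a x : Fit_in br S x -> Fit_in br S (a *: x).
Proof.
move=> [s [-> Hs]]; exists (map ( *:%R a) s); rewrite big_map scaler_sumr.
split=> // z /mapP [y ys ->].
have [I [hI nI Iy]] := Hs y ys.
exists I; split=> //; apply: subZ => //; by case: hI.
Qed.
Lemma Fit_br w x : FitB x -> FitB (br w x).
Proof.
move=> [s [-> Hs]]; exists (map (br w) s); rewrite big_map br_sumr.
split=> // z /mapP [y ys ->].
have [I [hI nI Iy]] := Hs y ys.
exists I; split=> //; by case: hI => _ [_ h]; apply: h.
Qed.

Variables (r : nat) (a : 'I_r -> B).
Lemma gen_lin c x y : gen_subalg br a x -> gen_subalg br a y ->
  gen_subalg br a (c *: x + y).
Proof. move=> hx hy P hP hb ha; case: (hP) => _ h; exact: h _ _ _ (hx P hP hb ha) (hy P hP hb ha). Qed.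
Lemma gen0 : gen_subalg br a 0.
Proof. by move=> P [h0 _]. Qed.
Lemma gen_br x y : gen_subalg br a x -> gen_subalg br a y ->
  gen_subalg br a (br x y).
Proof. move=> hx hy P hP hb ha; exact: hb _ _ (hx P hP hb ha) (hy P hP hb ha). Qed.
End Aux.

Theorem lemma3p5 (k : fieldType) (r : nat) (B : lmodType k)
    (br : B -> B -> B) (a : 'I_r -> B)
    (hr : (2 <= r)%N)
    (hLie : is_lie br)
    (hFr : free_metabelian_on br a)
    (Phi1 : forall x1 x2 x3 x4 : B, br (br x1 x2) (br x3 x4) = 0)
    (Phi2 : forall x y : B,
        br (br x y) x = 0 -> br (br x y) y = 0 -> br x y = 0)
    (Phi3 : forall x y z : B,
        x <> 0 -> br x y = 0 -> br x z = 0 -> br y z = 0)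
    (n : nat) (hn : (n <= r)%N) (c : 'I_n -> B)
    (hcF : forall i, gen_subalg br a (c i))
    (hind : forall lam : 'I_n -> k,
        Fit_in br (gen_subalg br a) (\sum_(i < n) lam i *: c i) ->
        forall i, lam i = 0) :
  forall lam : 'I_n -> k,
    Fit_in br (fun _ => True) (\sum_(i < n) lam i *: c i) ->
    forall i, lam i = 0.
Proof.
move=> lam hF; apply: hind.
set x := \sum_(i < n) _.
have gx : gen_subalg br a x.
  apply: (big_ind (gen_subalg br a)); first exact: gen0.
    by move=> u v hu hv; rewrite -[u]scale1r; apply: gen_lin.
  by move=> i _; rewrite -[_ *: _]addr0; apply: gen_lin => //; apply: gen0.
exists [:: x]; rewrite big_cons big_nil addr0; split=> // y.
rewrite inE => /eqP ->.
exists (fun z => gen_subalg br a z /\ Fit_in br (fun _ => True) z); split=> //.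
- split; first split.
  + split; [exact: gen0 | exact: Fit0].
  + move=> c0 u v [gu fu] [gv fv]; split; first exact: gen_lin.
    by apply: FitD => //; apply: FitZ.
  split; first by move=> z [].
  move=> s z gs [gz fz]; split; first exact: gen_br.
  by apply: Fit_br.
- exists 2%N; split=> // s hs Hs.
  case: s hs Hs => [|y1 [|y2 [|]]] //= _ Hs.
  have [_ f1] := Hs y1 (mem_head _ _).
  have [_ f2] : gen_subalg br a y2 /\ Fit_in br (fun _ => True) y2.
    by apply: Hs; rewrite !inE eqxx orbT.
  exact: Fit_ab.
Qed.
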